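(* For all $n\in\mathbb{N}$, $a_{n,1-n}=a_{n,n-1}=0$, and for all $j\in\mathbb{N}$, $a_{2j,1}=a_{2j,-1}=0$. Equivalently, the generating functions $A_k(x)=\sum_{n\ge\lfloor (k+1)/2\rfloor}\Theta^na_{n,k-n}x^n$ satisfy $A_{2j-1}\equiv0$ for all $j\in\mathbb{N}$.
   Context: Let $\varepsilon\in\{\pm1\}$, $b\in\mathbb{R}\setminus\{0\}$, $a\in\mathbb{C}$, and consider the degenerate third Painlevé equation $u''=\frac{(u')^2}{u}-\frac{u'}{\tau}+\frac1\tau(-8\varepsilon u^2+2ab)+\frac{b^2}{u}$. Put $\theta(\tau)=3^{3/2}(\varepsilon b)^{1/3}\tau^{2/3}$, $\Theta=3^{3/4}(\varepsilon b)^{1/6}$ (so $\theta=\Theta^2\tau^{2/3}$) and $\alpha=2i\sqrt3\,a$. Let $\varkappa\in\mathbb{C}$ with $|\mathrm{Re}\,\varkappa|<1/2$ and $w=\tau^{2\varkappa/3}e^{i\theta(\tau)}$. Consider the (general-solution) asymptotic expansion $$u(\tau)=\frac{\varepsilon(\varepsilon b)^{2/3}}{2}\tau^{1/3}\Big(1+\sum_{k=1}^{\infty}\tau^{-k/3}\sum_{j=-k}^{k}a_{k,j}w^j\Big),\qquad \mathrm{Re}\,\tau\to+\infty,\ |\mathrm{Im}\,\theta(\tau)|<\delta,$$ where $a_{1,0}=0$, $a_{1,1}a_{1,-1}=-\dfrac{i\varkappa}{\sqrt3(\varepsilon b)^{1/3}}$ (equivalently $\Theta^2a_{1,1}a_{1,-1}=-3i\varkappa$),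 and all remaining coefficients $a_{k,j}$ are uniquely determined by $a_{1,1},a_{1,-1},a,b,\varepsilon$ via formal substitution of the expansion into the equation; set $a_{0,0}=1$. *)

(* Defs.v *)
From HB Require Import structures.
From mathcomp Require Import all_boot all_order all_algebra.
From mathcomp Require Import complex.
Set Implicit Arguments. Unset Strict Implicit. Unset Printing Implicit Defensive.
Import Order.TTheory GRing.Theory Num.Theory.
Local Open Scope ring_scope.
Local Open Scope complex_scope.

(* A formal series  sum_{k,j} s k j * x^k * w^j  with x = tau^(-1/3),
   w = tau^(2 kappa/3) e^(i theta), stored by its coefficients. *)
Definition fseries (R : rcfType) := int -> int -> R[i].

Section Formal.
Variable R : rcfType.
Local Notation C := R[i].

(* Theta^2 = 3^(3/2) (eps b)^(1/3); beta := (eps b)^(1/3) (real cube root). *)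
Definition Theta2 (beta : R) : C := ((3 * Num.sqrt 3 * beta)%R)%:C.

Definition vser (a : nat -> int -> C) : fseries R :=
  fun k j => match k with Posz n => a n j | Negz _ => 0 end.

(* E = tau d/dtau + 1/3, acting on formal series:
   E (x^k w^j) = (1/3 - k/3 + 2 kappa j/3) x^k w^j + (2 i Theta^2 j/3) x^(k-2) w^j. *)
Definition Eop (kappa : C) (beta : R) (s : fseries R) : fseries R :=
  fun k j => (1 / 3 - k%:~R / 3 + 2 * kappa * j%:~R / 3) * s k j
           + (2 * 'i * Theta2 beta * j%:~R / 3) * s (k + 2) j.

(* Cauchy product of formal series supported in {k >= -8, |j| <= k + 8}. *)
Definition bandL : int := 8.
Definition fmul (s t : fseries R) : fseries R :=
  fun k j =>
    let M := (`|k| + 2 * bandL)%R in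
    \sum_(p < absz (k + 2 * bandL + 1))
      \sum_(q < absz (2 * M + 1))
        s (p%:Z - bandL) (q%:Z - M) * t (k - (p%:Z - bandL)) (j - (q%:Z - M)).

(* Formal substitution of u = eps (eps b)^(2/3)/2 * tau^(1/3) * v into
   u'' = u'^2/u - u'/tau + (-8 eps u^2 + 2ab)/tau + b^2/u.
   Multiplying by tau^2 u, dividing by (eps (eps b)^(2/3)/2)^2 tau^(2/3) and by
   tau^(4/3) gives the equivalent formal identity
     x^4 (v E^2 v - (E v)^2) + 4 beta^2 (v^3 - 1) - 4 a beta x^2 v = 0. *)
Definition formal_solution (a : C) (beta : R) (kappa : C)
    (coef : nat -> int -> C) : Prop :=
  let v := vser coef in
  let Ev := Eop kappa beta v in
  forall k j : int,
    (fmul v (Eop kappa beta Ev) (k - 4) j - fmul Ev Ev (k - 4) j)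
    + 4 * (beta ^+ 2)%:C * (fmul (fmul v v) v k j - (if (k == 0) && (j == 0) then 1 else 0))
    - 4 * a * beta%:C * v (k - 2) j = 0.

End Formal.

(* Main.v *)
Require Import Defs.
From HB Require Import structures.
From mathcomp Require Import all_boot all_order all_algebra.
From mathcomp Require Import complex.
From mathcomp Require Import zify ring lra.
From Stdlib Require Import FunctionalExtensionality.
Set Implicit Arguments. Unset Strict Implicit. Unset Printing Implicit Defensive.
Import Order.TTheory GRing.Theory Num.Theory.
Local Open Scope ring_scope.
Local Open Scope complex_scope.

Definition addf_def (R : rcfType) (s t : fseries R) : fseries R := fun k j => s k j + t k j.
Fact addf_key : unit. Proof. exact: tt. Qed.
Definition addf (R : rcfType) := locked_with addf_key (@addf_def R).
Arguments addf {R}.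
Lemma addfE (R : rcfType) (s t : fseries R) k j : addf s t k j = s k j + t k j.
Proof. by rewrite /addf unlock. Qed.

Lemma fmulDl (R : rcfType) (s1 s2 t : fseries R) :
  fmul (addf s1 s2) t = addf (fmul s1 t) (fmul s2 t).
Proof.
apply: functional_extensionality => k; apply: functional_extensionality => j.
rewrite addfE /fmul -big_split /=; apply: eq_bigr => p _.
rewrite -big_split /=; apply: eq_bigr => q _; rewrite addfE; exact: mulrDl.
Qed.

Lemma fmulDr (R : rcfType) (s t1 t2 : fseries R) :
  fmul s (addf t1 t2) = addf (fmul s t1) (fmul s t2).
Proof.
apply: functional_extensionality => k; apply: functional_extensionality => j.
rewrite addfE /fmul -big_split /=; apply: eq_bigr => p _.
rewrite -big_split /=; apply: eq_bigr => q _; rewrite addfE; exact: mulrDr.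
Qed.

Lemma EopD (R : rcfType) kappa beta (s t : fseries R) :
  Eop kappa beta (addf s t) = addf (Eop kappa beta s) (Eop kappa beta t).
Proof.
apply: functional_extensionality => k; apply: functional_extensionality => j.
rewrite /Eop !addfE; ring.
Qed.

Lemma fmul_list (R : rcfType) (s t : fseries R) (k j : int) (L : seq (int * int)) :
  uniq L ->
  all (fun x : int * int => (-8 <= x.1) && (x.1 <= k + 8) && (- (`|k| + 16) <= x.2) && (x.2 <= `|k| + 16)) L ->
  (forall p q, (p, q) \notin L -> s p q * t (k - p) (j - q) = 0) ->
  fmul s t k j = \sum_(x <- L) s x.1 x.2 * t (k - x.1) (j - x.2).
Proof.
move=> uL aL H.
rewrite /fmul /bandL.
set M := (`|k| + 2 * 8)%R.
set f := fun x : int * int => s x.1 x.2 * t (k - x.1) (j - x.2).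
set P := absz (k + 2 * 8 + 1). set Q := absz (2 * M + 1).
pose G := [seq ((p%:Z - 8), (q%:Z - M)) | p <- iota 0 P, q <- iota 0 Q].
have -> : \sum_(p < P) \sum_(q < Q) s (p%:Z - 8) (q%:Z - M) * t (k - (p%:Z - 8)) (j - (q%:Z - M))
   = \sum_(x <- G) f x.
  rewrite big_allpairs_dep /=.
  have E1 : forall N, iota 0 N = index_iota 0 N by move=> N; rewrite /index_iota subn0.
  rewrite E1 big_mkord; apply: eq_bigr => p _; rewrite E1 big_mkord.
  by apply: eq_bigr.
rewrite (bigID (fun x => x \in L)) /=.
rewrite [X in _ + X]big1 ?addr0; last first.
  by move=> [p q] /= Hn; apply: H.
rewrite -big_filter; apply: perm_big; apply: uniq_perm.
- rewrite filter_uniq //; apply: allpairs_uniq; rewrite ?iota_uniq //.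
  move=> [a b] [c d] _ _ /= [] h1 h2; congr (_, _); lia.
- exact: uL.
- move=> [x y]; rewrite mem_filter; apply/andP/idP => [[]//|Hx]; split => //.
  move/allP: aL => /(_ _ Hx) /= Hb.
  apply/allpairsP; exists (absz (x + 8), absz (y + M)); rewrite /= !mem_iota.
  split; [lia|lia|]; congr (_, _); rewrite /M; lia.
Qed.

Lemma fmul_boxL (R : rcfType) (s t : fseries R) (k j : int) (A B : seq int) :
  uniq A -> uniq B ->
  all (fun a : int => (-8 <= a) && (a <= k + 8)) A ->
  all (fun b : int => (- (`|k| + 16) <= b) && (b <= `|k| + 16)) B ->
  (forall p q, ~~ ((p \in A) && (q \in B)) -> s p q * t (k - p) (j - q) = 0) ->
  fmul s t k j = \sum_(a <- A) \sum_(b <- B) s a b * t (k - a) (j - b).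
Proof.
move=> uA uB aA aB H.
rewrite (@fmul_list _ _ _ _ _ [seq (a, b) | a <- A, b <- B]).
- by rewrite big_allpairs_dep.
- by apply: allpairs_uniq => // [[a b] [c d]] _ _ /= [-> ->].
- apply/allP => x /allpairsP [[a b] /= [ha hb ->]] /=.
  move/allP: aA => /(_ _ ha) /andP [h1 h2].
  move/allP: aB => /(_ _ hb) /andP [h3 h4].
  by rewrite h1 h2 h3 h4.
- move=> p q Hn; apply: H; apply: contra Hn => /andP [hp hq].
  by apply/allpairsP; exists (p, q).
Qed.

Lemma fmul_boxR (R : rcfType) (s t : fseries R) (k j : int) (A B : seq int) :
  uniq A -> uniq B ->
  all (fun a : int => (-8 <= k - a) && (k - a <= k + 8)) A ->
  all (fun b : int => (- (`|k| + 16) <= j - b) && (j - b <= `|k| + 16)) B ->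
  (forall p q, ~~ ((k - p \in A) && (j - q \in B)) -> s p q * t (k - p) (j - q) = 0) ->
  fmul s t k j = \sum_(a <- A) \sum_(b <- B) s (k - a) (j - b) * t a b.
Proof.
move=> uA uB aA aB H.
rewrite (@fmul_list _ _ _ _ _ [seq (k - a, j - b) | a <- A, b <- B]).
- rewrite big_allpairs_dep; apply: eq_bigr => a _; apply: eq_bigr => b _ /=.
  by rewrite !subKr.
- apply: allpairs_uniq => // [[a b] [c d]] _ _ /= [h1 h2].
  by congr (_, _); lia.
- apply/allP => x /allpairsP [[a b] /= [ha hb ->]] /=.
  move/allP: aA => /(_ _ ha) /andP [h1 h2].
  move/allP: aB => /(_ _ hb) /andP [h3 h4].
  by rewrite h1 h2 h3 h4.
- move=> p q Hn; apply: H; apply: contra Hn => /andP [hp hq].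
  apply/allpairsP; exists (k - p, j - q) => /=; split => //; congr (_, _); lia.
Qed.

Definition elo (R : rcfType) (pp qq s2 s0 sm : R[i]) (k j : int) : R[i] :=
  match k with
  | Posz 0 => match j with Posz 0 => 1 | _ => 0 end
  | Posz 1 => match j with Posz 1 => pp | Negz 0 => qq | _ => 0 end
  | Posz 2 => match j with Posz 2 => s2 | Posz 0 => s0 | Negz 1 => sm | _ => 0 end
  | _ => 0 end.

Definition eloif (R : rcfType) (pp qq s2 s0 sm : R[i]) : fseries R :=
  fun k j => if k == 0 then (if j == 0 then 1 else 0)
  else if k == 1 then (if j == 1 then pp else if j == -1 then qq else 0)
  else if k == 2 then (if j == 2 then s2 else if j == 0 then s0 else if j == -2 then sm else 0)
  else 0.

Lemma eloE (R : rcfType) (pp qq s2 s0 sm : R[i]) k j :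
  elo pp qq s2 s0 sm k j = eloif pp qq s2 s0 sm k j.
Proof.
by case: k => [[|[|[|k]]]|k]; case: j => [[|[|[|j]]]|[|[|j]]].
Qed.

Lemma elo_out (R : rcfType) (pp qq s2 s0 sm : R[i]) p q :
  ~~ ((p \in [:: 0; 1; 2]) && (q \in [:: -2; -1; 0; 1; 2])) -> elo pp qq s2 s0 sm p q = 0.
Proof.
rewrite !inE eloE /eloif => H.
case: ifP => [/eqP hp|_]; first by case: ifP => // /eqP hq; exfalso; move: H; rewrite hp hq.
case: ifP => [/eqP hp|_].
  case: ifP => [/eqP hq|_]; first by move: H; rewrite hp hq.
  by case: ifP => [/eqP hq|_] //; move: H; rewrite hp hq.
case: ifP => [/eqP hp|_] //.
case: ifP => [/eqP hq|_]; first by move: H; rewrite hp hq.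
case: ifP => [/eqP hq|_]; first by move: H; rewrite hp hq.
by case: ifP => [/eqP hq|_] //; move: H; rewrite hp hq.
Qed.

Lemma fmul_eloL (R : rcfType) (pp qq s2 s0 sm : R[i]) (t : fseries R) k j :
  -6 <= k ->
  fmul (elo pp qq s2 s0 sm) t k j =
    t k j + pp * t (k - 1) (j - 1) + qq * t (k - 1) (j + 1)
    + s2 * t (k - 2) (j - 2) + s0 * t (k - 2) j + sm * t (k - 2) (j + 2).
Proof.
move=> hk.
rewrite (@fmul_boxL _ _ _ _ _ [:: 0; 1; 2] [:: -2; -1; 0; 1; 2]) //; last first.
- by move=> p q H; rewrite elo_out // mul0r.
- rewrite /=; lia.
- rewrite /=; lia.
rewrite !big_cons !big_nil !eloE /eloif /= !subr0 !opprK.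
ring.
Qed.

Lemma fmul_eloR (R : rcfType) (pp qq s2 s0 sm : R[i]) (t : fseries R) k j :
  -6 <= k -> `|j| + 2 <= `|k| + 16 ->
  fmul t (elo pp qq s2 s0 sm) k j =
    t k j + pp * t (k - 1) (j - 1) + qq * t (k - 1) (j + 1)
    + s2 * t (k - 2) (j - 2) + s0 * t (k - 2) j + sm * t (k - 2) (j + 2).
Proof.
move=> hk hj.
rewrite (@fmul_boxR _ _ _ _ _ [:: 0; 1; 2] [:: -2; -1; 0; 1; 2]) //; last first.
- by move=> p q H; rewrite elo_out // mulr0.
- rewrite /=; lia.
- rewrite /=; lia.
rewrite !big_cons !big_nil !eloE /eloif /= !subr0 !opprK.
ring.
Qed.

Definition evz (z : int) : bool := ((z %% 2)%Z == 0).
Definition evenS (R : rcfType) (s : fseries R) := forall k j, ~~ evz (k + j) -> s k j = 0.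
Definition oddS (R : rcfType) (s : fseries R) := forall k j, evz (k + j) -> s k j = 0.
Definition lows (R : rcfType) (s : fseries R) (m : int) := forall k j, k < m -> s k j = 0.
Definition tri (R : rcfType) (s : fseries R) (c : int) := forall k j, k + c < `|j| -> s k j = 0.

Lemma fmul_zero (R : rcfType) (s t : fseries R) k j :
  (forall p q, s p q * t (k - p) (j - q) = 0) -> fmul s t k j = 0.
Proof. by move=> H; rewrite /fmul big1 // => p _; rewrite big1 // => q _. Qed.

Lemma fmul_ee (R : rcfType) (s t : fseries R) : evenS s -> evenS t -> evenS (fmul s t).
Proof.
move=> hs ht k j hkj; apply: fmul_zero => p q.
case: (boolP (evz (p + q))) => h.
  by rewrite ht ?mulr0 //; move: h hkj; rewrite /evz; lia.
by rewrite hs ?mul0r.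
Qed.

Lemma fmul_eo (R : rcfType) (s t : fseries R) : evenS s -> oddS t -> oddS (fmul s t).
Proof.
move=> hs ht k j hkj; apply: fmul_zero => p q.
case: (boolP (evz (p + q))) => h.
  by rewrite ht ?mulr0 //; move: h hkj; rewrite /evz; lia.
by rewrite hs ?mul0r.
Qed.

Lemma fmul_oe (R : rcfType) (s t : fseries R) : oddS s -> evenS t -> oddS (fmul s t).
Proof.
move=> hs ht k j hkj; apply: fmul_zero => p q.
case: (boolP (evz (p + q))) => h; first by rewrite hs ?mul0r.
by rewrite ht ?mulr0 //; move: h hkj; rewrite /evz; lia.
Qed.

Lemma fmul_oo (R : rcfType) (s t : fseries R) : oddS s -> oddS t -> evenS (fmul s t).
Proof.
move=> hs ht k j hkj; apply: fmul_zero => p q.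
case: (boolP (evz (p + q))) => h; first by rewrite hs ?mul0r.
by rewrite ht ?mulr0 //; move: h hkj; rewrite /evz; lia.
Qed.

Lemma Eop_even (R : rcfType) ka be (s : fseries R) : evenS s -> evenS (Eop ka be s).
Proof.
move=> hs k j h; rewrite /Eop !hs ?mulr0 ?addr0 //; move: h; rewrite /evz; lia.
Qed.

Lemma Eop_odd (R : rcfType) ka be (s : fseries R) : oddS s -> oddS (Eop ka be s).
Proof.
move=> hs k j h; rewrite /Eop !hs ?mulr0 ?addr0 //; move: h; rewrite /evz; lia.
Qed.

Lemma lows_fmul (R : rcfType) (s t : fseries R) a b :
  lows s a -> lows t b -> lows (fmul s t) (a + b).
Proof.
move=> hs ht k j hk; apply: fmul_zero => p q.
case: (ltP p a) => h; first by rewrite hs ?mul0r.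
by rewrite ht ?mulr0 //; lia.
Qed.

Lemma lows_Eop (R : rcfType) ka be (s : fseries R) m : lows s m -> lows (Eop ka be s) (m - 2).
Proof. move=> hs k j h; rewrite /Eop !hs ?mulr0 ?addr0 //; lia. Qed.

Lemma tri_fmul (R : rcfType) (s t : fseries R) a b :
  tri s a -> tri t b -> tri (fmul s t) (a + b).
Proof.
move=> hs ht k j hk; apply: fmul_zero => p q.
case: (ltP (p + a) `|q|) => h; first by rewrite hs ?mul0r.
by rewrite ht ?mulr0 //; lia.
Qed.

Lemma tri_Eop (R : rcfType) ka be (s : fseries R) c : tri s c -> tri (Eop ka be s) (c + 2).
Proof. move=> hs k j h; rewrite /Eop !hs ?mulr0 ?addr0 //; lia. Qed.

Definition Fv (R : rcfType) (a : R[i]) (beta : R) (kappa : R[i]) (s : fseries R) (k j : int) : R[i] :=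
  (fmul s (Eop kappa beta (Eop kappa beta s)) (k - 4) j
     - fmul (Eop kappa beta s) (Eop kappa beta s) (k - 4) j)
  + 4 * (beta ^+ 2)%:C * (fmul (fmul s s) s k j - (if (k == 0) && (j == 0) then 1 else 0))
  - 4 * a * beta%:C * s (k - 2) j.

Lemma formal_Fv (R : rcfType) (a : R[i]) beta kappa coef :
  formal_solution a beta kappa coef -> forall k j, Fv a beta kappa (vser coef) k j = 0.
Proof. by move=> H k j; apply: H. Qed.

Definition Lin (R : rcfType) (a : R[i]) (beta : R) (kappa : R[i]) (e o : fseries R) (k j : int) : R[i] :=
  fmul e (Eop kappa beta (Eop kappa beta o)) (k - 4) j
  + fmul o (Eop kappa beta (Eop kappa beta e)) (k - 4) j
  - fmul (Eop kappa beta e) (Eop kappa beta o) (k - 4) j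
  - fmul (Eop kappa beta o) (Eop kappa beta e) (k - 4) j
  + 4 * (beta ^+ 2)%:C * (fmul (fmul e e) o k j + fmul (fmul e o) e k j + fmul (fmul o e) e k j)
  - 4 * a * beta%:C * o (k - 2) j.

Lemma odd_eq (R : rcfType) (a : R[i]) beta kappa (e o : fseries R) m k j :
  evenS e -> oddS o -> lows o m -> k < 3 * m -> ~~ evz (k + j) ->
  Fv a beta kappa (addf e o) k j = Lin a beta kappa e o k j.
Proof.
move=> he ho hlo hk hkj.
have hEe : evenS (Eop kappa beta e) by apply: Eop_even.
have hEo : oddS (Eop kappa beta o) by apply: Eop_odd.
have hEEe : evenS (Eop kappa beta (Eop kappa beta e)) by apply: Eop_even.
have hEEo : oddS (Eop kappa beta (Eop kappa beta o)) by apply: Eop_odd.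
have hk4 : ~~ evz (k - 4 + j) by move: hkj; rewrite /evz; lia.
rewrite /Fv /Lin !EopD; do 4 rewrite ?fmulDl ?fmulDr; rewrite !addfE.
rewrite (fmul_ee he hEEe hk4) (fmul_oo ho hEEo hk4) (fmul_ee hEe hEe hk4) (fmul_oo hEo hEo hk4).
rewrite (fmul_ee (fmul_ee he he) he hkj) (fmul_ee (fmul_oo ho ho) he hkj).
rewrite (fmul_oo (fmul_eo he ho) ho hkj) (fmul_oo (fmul_oe ho he) ho hkj).
have -> : fmul (fmul o o) o k j = 0.
  apply: (lows_fmul (lows_fmul hlo hlo) hlo); lia.
have -> : ((k == 0) && (j == 0)) = false.
  by apply/negbTE; apply: contra hkj => /andP [/eqP -> /eqP ->].
rewrite (he (k - 2) j); last by move: hkj; rewrite /evz; lia.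
ring.
Qed.

Lemma fmul_extL (R : rcfType) (s s' t : fseries R) k j :
  (forall p q, s p q = s' p q \/ t (k - p) (j - q) = 0) -> fmul s t k j = fmul s' t k j.
Proof.
move=> H; rewrite /fmul; apply: eq_bigr => p _; apply: eq_bigr => q _.
by case: (H (p%:Z - bandL) (q%:Z - (`|k| + 2 * bandL))) => ->; rewrite ?mulr0.
Qed.

Lemma fmul_extR (R : rcfType) (s t t' : fseries R) k j :
  (forall p q, t (k - p) (j - q) = t' (k - p) (j - q) \/ s p q = 0) -> fmul s t k j = fmul s t' k j.
Proof.
move=> H; rewrite /fmul; apply: eq_bigr => p _; apply: eq_bigr => q _.
by case: (H (p%:Z - bandL) (q%:Z - (`|k| + 2 * bandL))) => ->; rewrite ?mul0r.
Qed.

Definition agree (R : rcfType) (s s' : fseries R) (m : int) := forall p q, p <= m -> s p q = s' p q.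

Lemma agree_Eop (R : rcfType) ka be (s s' : fseries R) m :
  agree s s' m -> agree (Eop ka be s) (Eop ka be s') (m - 2).
Proof. by move=> H p q hp; rewrite /Eop !H //; lia. Qed.

Lemma agree_fmul (R : rcfType) (s s' t t' : fseries R) m :
  agree s s' m -> agree t t' m -> lows s 0 -> lows s' 0 -> lows t 0 -> lows t' 0 ->
  agree (fmul s t) (fmul s' t') m.
Proof.
move=> hs ht ls ls' lt lt' k j hk.
rewrite /fmul; apply: eq_bigr => p _; apply: eq_bigr => q _.
set a := (p%:Z - bandL); set b := (q%:Z - (`|k| + 2 * bandL)).
case: (ltP a 0) => h1; first by rewrite ls ?ls' ?mul0r.
case: (ltP k a) => h2; first by rewrite lt ?lt' ?mulr0 //; lia.
by rewrite hs ?ht //; lia.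
Qed.

Lemma Lin_loc (R : rcfType) (a : R[i]) beta kappa (e e' o : fseries R) (n K j : int) :
  lows e 0 -> lows e' 0 -> agree e e' 2 -> lows o n -> K <= n + 2 ->
  Lin a beta kappa e o K j = Lin a beta kappa e' o K j.
Proof.
move=> le le' ag lo hK.
have lEo := lows_Eop kappa beta lo.
have lEEo := lows_Eop kappa beta lEo.
have aE := agree_Eop kappa beta ag.
have aEE := agree_Eop kappa beta aE.
have leo : lows (fmul e o) (0 + n) by apply: lows_fmul.
have loe : lows (fmul o e) (n + 0) by apply: lows_fmul.
rewrite /Lin.
congr (_ + _ - _ - _ + _ * (_ + _ + _) - _).
- apply: fmul_extL => p q; case: (lerP p 2) => h; first by left; apply: ag.
  by right; apply: lEEo; lia.
- apply: fmul_extR => p q; case: (ltP p n) => h; first by right; apply: lo.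
  by left; apply: aEE; lia.
- apply: fmul_extL => p q; case: (lerP p 0) => h; first by left; apply: aE; lia.
  by right; apply: lEo; lia.
- apply: fmul_extR => p q; case: (ltP p (n - 2)) => h; first by right; apply: lEo.
  by left; apply: aE; lia.
- apply: fmul_extL => p q; case: (lerP p 2) => h.
    by left; apply: (agree_fmul ag ag le le' le le').
  by right; apply: lo; lia.
- rewrite (@fmul_extR _ _ e e'); last first.
    move=> p q; case: (ltP p n) => h; first by right; apply: leo; lia.
    by left; apply: ag; lia.
  apply: fmul_extL => p q; case: (ltP (K - p) 0) => h; first by right; apply: le'.
  left; apply: fmul_extL => p' q'; case: (lerP p' 2) => h'; first by left; apply: ag.
  by right; apply: lo; lia.
- rewrite (@fmul_extR _ _ e e'); last first.
    move=> p q; case: (ltP p n) => h; first by right; apply: loe; lia.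
    by left; apply: ag; lia.
  apply: fmul_extL => p q; case: (ltP (K - p) 0) => h; first by right; apply: le'.
  left; apply: fmul_extR => p' q'; case: (ltP p' n) => h'; first by right; apply: lo.
  by left; apply: ag; lia.
Qed.

Lemma lows_elo (R : rcfType) (pp qq s2 s0 sm : R[i]) : lows (elo pp qq s2 s0 sm) 0.
Proof. move=> k j h; rewrite eloE /eloif; do !(case: ifP => /eqP ?) => //; lia. Qed.

Lemma tri_elo (R : rcfType) (pp qq s2 s0 sm : R[i]) : tri (elo pp qq s2 s0 sm) 0.
Proof. move=> k j h; rewrite eloE /eloif; do !(case: ifP => /eqP ?) => //; lia. Qed.


Ltac zby L := rewrite L; [ by rewrite ?mul0r ?mulr0 | lia ].


Lemma boxT2 (R : rcfType) kappa beta (pp qq s2 s0 sm : R[i]) (o : fseries R) (n K j : int) :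
  lows o n -> 2 <= n -> n <= K <= n + 2 -> `|j| <= K ->
  fmul o (Eop kappa beta (Eop kappa beta (elo pp qq s2 s0 sm))) (K - 4) j =
  \sum_(a <- [:: -4; -3; -2]) \sum_(b <- [:: -2; -1; 0; 1; 2])
     o (K - 4 - a) (j - b) * Eop kappa beta (Eop kappa beta (elo pp qq s2 s0 sm)) a b.
Proof.
move=> lo hn hK hj.
have lEEe := lows_Eop kappa beta (lows_Eop kappa beta (lows_elo pp qq s2 s0 sm)).
have tEEe := tri_Eop kappa beta (tri_Eop kappa beta (tri_elo pp qq s2 s0 sm)).
apply: fmul_boxR => //; try by rewrite /=; lia.
move=> p q; rewrite !inE => H.
case: (ltP p n) => ?; first by zby lo.
case: (ltP (K - 4 - p) (-4)) => ?; first by zby lEEe.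
by zby tEEe.
Qed.

Lemma boxT3 (R : rcfType) kappa beta (pp qq s2 s0 sm : R[i]) (o : fseries R) (n K j : int) :
  lows o n -> 2 <= n -> n <= K <= n + 2 -> `|j| <= K ->
  fmul (Eop kappa beta (elo pp qq s2 s0 sm)) (Eop kappa beta o) (K - 4) j =
  \sum_(a <- [:: -2; -1; 0]) \sum_(b <- [:: -2; -1; 0; 1; 2])
     Eop kappa beta (elo pp qq s2 s0 sm) a b * Eop kappa beta o (K - 4 - a) (j - b).
Proof.
move=> lo hn hK hj.
have lEe := lows_Eop kappa beta (lows_elo pp qq s2 s0 sm).
have tEe := tri_Eop kappa beta (tri_elo pp qq s2 s0 sm).
have lEo := lows_Eop kappa beta lo.
apply: fmul_boxL => //; try by rewrite /=; lia.
move=> p q; rewrite !inE => H.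
case: (ltP p (-2)) => ?; first by zby lEe.
case: (ltP 0 p) => ?; first by zby lEo.
by zby tEe.
Qed.

Lemma boxT4 (R : rcfType) kappa beta (pp qq s2 s0 sm : R[i]) (o : fseries R) (n K j : int) :
  lows o n -> 2 <= n -> n <= K <= n + 2 -> `|j| <= K ->
  fmul (Eop kappa beta o) (Eop kappa beta (elo pp qq s2 s0 sm)) (K - 4) j =
  \sum_(a <- [:: -2; -1; 0]) \sum_(b <- [:: -2; -1; 0; 1; 2])
     Eop kappa beta o (K - 4 - a) (j - b) * Eop kappa beta (elo pp qq s2 s0 sm) a b.
Proof.
move=> lo hn hK hj.
have lEe := lows_Eop kappa beta (lows_elo pp qq s2 s0 sm).
have tEe := tri_Eop kappa beta (tri_elo pp qq s2 s0 sm).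
have lEo := lows_Eop kappa beta lo.
apply: fmul_boxR => //; try by rewrite /=; lia.
move=> p q; rewrite !inE => H.
case: (ltP p (n - 2)) => ?; first by zby lEo.
case: (ltP (K - 4 - p) (-2)) => ?; first by zby lEe.
by zby tEe.
Qed.

Lemma boxT5 (R : rcfType) (pp qq s2 s0 sm : R[i]) (o : fseries R) (n K j : int) :
  lows o n -> 2 <= n -> n <= K <= n + 2 -> `|j| <= K ->
  fmul (fmul (elo pp qq s2 s0 sm) (elo pp qq s2 s0 sm)) o K j =
  \sum_(a <- [:: 0; 1; 2]) \sum_(b <- [:: -2; -1; 0; 1; 2])
     fmul (elo pp qq s2 s0 sm) (elo pp qq s2 s0 sm) a b * o (K - a) (j - b).
Proof.
move=> lo hn hK hj.
have lee := lows_fmul (lows_elo pp qq s2 s0 sm) (lows_elo pp qq s2 s0 sm).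
have tee := tri_fmul (tri_elo pp qq s2 s0 sm) (tri_elo pp qq s2 s0 sm).
apply: fmul_boxL => //; try by rewrite /=; lia.
move=> p q; rewrite !inE => H.
case: (ltP p 0) => ?; first by zby lee.
case: (ltP 2 p) => ?; first by zby lo.
by zby tee.
Qed.

Definition view (R : rcfType) (s : fseries R) (K j0 c d : int) : R[i] := s (K - c) (j0 - d).

Lemma view_Eop (R : rcfType) ka be (s : fseries R) K j0 c d :
  view (Eop ka be s) K j0 c d =
   (1 / 3 - (K - c)%:~R / 3 + 2 * ka * (j0 - d)%:~R / 3) * view s K j0 c d
   + (2 * 'i * Theta2 be * (j0 - d)%:~R / 3) * view s K j0 (c - 2) d.
Proof. by rewrite /view /Eop; have -> : K - c + 2 = K - (c - 2) by ring. Qed.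

Lemma view_eloL (R : rcfType) (pp qq s2 s0 sm : R[i]) (t : fseries R) K j0 c d :
  -6 <= K - c ->
  view (fmul (elo pp qq s2 s0 sm) t) K j0 c d =
    view t K j0 c d + pp * view t K j0 (c + 1) (d + 1) + qq * view t K j0 (c + 1) (d - 1)
    + s2 * view t K j0 (c + 2) (d + 2) + s0 * view t K j0 (c + 2) d + sm * view t K j0 (c + 2) (d - 2).
Proof.
move=> h; rewrite /view fmul_eloL //.
have -> : K - c - 1 = K - (c + 1) by ring.
have -> : K - c - 2 = K - (c + 2) by ring.
have -> : j0 - d - 1 = j0 - (d + 1) by ring.
have -> : j0 - d + 1 = j0 - (d - 1) by ring.
have -> : j0 - d - 2 = j0 - (d + 2) by ring.
by have -> : j0 - d + 2 = j0 - (d - 2) by ring.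
Qed.

Lemma view_eloR (R : rcfType) (pp qq s2 s0 sm : R[i]) (t : fseries R) K j0 c d :
  -6 <= K - c -> `|j0 - d| + 2 <= `|K - c| + 16 ->
  view (fmul t (elo pp qq s2 s0 sm)) K j0 c d =
    view t K j0 c d + pp * view t K j0 (c + 1) (d + 1) + qq * view t K j0 (c + 1) (d - 1)
    + s2 * view t K j0 (c + 2) (d + 2) + s0 * view t K j0 (c + 2) d + sm * view t K j0 (c + 2) (d - 2).
Proof.
move=> h h'; rewrite /view fmul_eloR //.
have -> : K - c - 1 = K - (c + 1) by ring.
have -> : K - c - 2 = K - (c + 2) by ring.
have -> : j0 - d - 1 = j0 - (d + 1) by ring.
have -> : j0 - d + 1 = j0 - (d - 1) by ring.
have -> : j0 - d - 2 = j0 - (d + 2) by ring.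
by have -> : j0 - d + 2 = j0 - (d - 2) by ring.
Qed.

Lemma view_T2 (R : rcfType) kappa beta (pp qq s2 s0 sm : R[i]) (o : fseries R) (n K j0 c d : int) :
  lows o n -> 2 <= n -> n <= K - c + 4 <= n + 2 -> `|j0 - d| <= K - c + 4 ->
  view (fmul o (Eop kappa beta (Eop kappa beta (elo pp qq s2 s0 sm)))) K j0 c d =
  \sum_(a <- [:: -4; -3; -2]) \sum_(b <- [:: -2; -1; 0; 1; 2])
     view o K j0 (c + a) (d + b) * Eop kappa beta (Eop kappa beta (elo pp qq s2 s0 sm)) a b.
Proof.
move=> lo hn hK hj; rewrite /view.
have -> : K - c = K - c + 4 - 4 by ring.
rewrite (boxT2 _ _ _ _ _ _ _ lo hn hK hj).
apply: eq_bigr => a _; apply: eq_bigr => b _.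
have -> : K - c + 4 - 4 - a = K - (c + a) by ring.
by have -> : j0 - d - b = j0 - (d + b) by ring.
Qed.

Lemma view_T3 (R : rcfType) kappa beta (pp qq s2 s0 sm : R[i]) (o : fseries R) (n K j0 c d : int) :
  lows o n -> 2 <= n -> n <= K - c + 4 <= n + 2 -> `|j0 - d| <= K - c + 4 ->
  view (fmul (Eop kappa beta (elo pp qq s2 s0 sm)) (Eop kappa beta o)) K j0 c d =
  \sum_(a <- [:: -2; -1; 0]) \sum_(b <- [:: -2; -1; 0; 1; 2])
     Eop kappa beta (elo pp qq s2 s0 sm) a b * view (Eop kappa beta o) K j0 (c + a) (d + b).
Proof.
move=> lo hn hK hj; rewrite /view.
have -> : K - c = K - c + 4 - 4 by ring.
rewrite (boxT3 _ _ _ _ _ _ _ lo hn hK hj).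
apply: eq_bigr => a _; apply: eq_bigr => b _.
have -> : K - c + 4 - 4 - a = K - (c + a) by ring.
by have -> : j0 - d - b = j0 - (d + b) by ring.
Qed.

Lemma view_T4 (R : rcfType) kappa beta (pp qq s2 s0 sm : R[i]) (o : fseries R) (n K j0 c d : int) :
  lows o n -> 2 <= n -> n <= K - c + 4 <= n + 2 -> `|j0 - d| <= K - c + 4 ->
  view (fmul (Eop kappa beta o) (Eop kappa beta (elo pp qq s2 s0 sm))) K j0 c d =
  \sum_(a <- [:: -2; -1; 0]) \sum_(b <- [:: -2; -1; 0; 1; 2])
     view (Eop kappa beta o) K j0 (c + a) (d + b) * Eop kappa beta (elo pp qq s2 s0 sm) a b.
Proof.
move=> lo hn hK hj; rewrite /view.
have -> : K - c = K - c + 4 - 4 by ring.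
rewrite (boxT4 _ _ _ _ _ _ _ lo hn hK hj).
apply: eq_bigr => a _; apply: eq_bigr => b _.
have -> : K - c + 4 - 4 - a = K - (c + a) by ring.
by have -> : j0 - d - b = j0 - (d + b) by ring.
Qed.

Lemma view_T5 (R : rcfType) (pp qq s2 s0 sm : R[i]) (o : fseries R) (n K j0 c d : int) :
  lows o n -> 2 <= n -> n <= K - c <= n + 2 -> `|j0 - d| <= K - c ->
  view (fmul (fmul (elo pp qq s2 s0 sm) (elo pp qq s2 s0 sm)) o) K j0 c d =
  \sum_(a <- [:: 0; 1; 2]) \sum_(b <- [:: -2; -1; 0; 1; 2])
     fmul (elo pp qq s2 s0 sm) (elo pp qq s2 s0 sm) a b * view o K j0 (c + a) (d + b).
Proof.
move=> lo hn hK hj; rewrite /view.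
rewrite (boxT5 _ _ _ _ _ lo hn hK hj).
apply: eq_bigr => a _; apply: eq_bigr => b _.
have -> : K - c - a = K - (c + a) by ring.
by have -> : j0 - d - b = j0 - (d + b) by ring.
Qed.

Lemma Lin_view (R : rcfType) (a : R[i]) beta kappa (e o : fseries R) K j0 :
  Lin a beta kappa e o K j0 =
  view (fmul e (Eop kappa beta (Eop kappa beta o))) K j0 4 0
  + view (fmul o (Eop kappa beta (Eop kappa beta e))) K j0 4 0
  - view (fmul (Eop kappa beta e) (Eop kappa beta o)) K j0 4 0
  - view (fmul (Eop kappa beta o) (Eop kappa beta e)) K j0 4 0
  + 4 * (beta ^+ 2)%:C * (view (fmul (fmul e e) o) K j0 0 0 + view (fmul (fmul e o) e) K j0 0 0
                          + view (fmul (fmul o e) e) K j0 0 0)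
  - 4 * a * beta%:C * view o K j0 2 0.
Proof. by rewrite /Lin /view !subr0. Qed.

Definition O1 (R : rcfType) (o : fseries R) (n j : int) (c d : int) : R[i] :=
  match c with
  | Posz 0 => match d with Posz 0 => o n j | _ => view o n j c d end
  | Posz _ => 0
  | Negz _ => view o n j c d
  end.

Definition O2 (R : rcfType) (o : fseries R) (n j0 : int) (c d : int) : R[i] :=
  match c with
  | Posz 0 => match d with Posz 0 => o (n + 1) j0 | _ => view o (n + 1) j0 c d end
  | Posz 1 => if d == j0 - 1 then o n 1 else if d == j0 + 1 then o n (-1) else 0
  | Posz _ => 0
  | Negz _ => view o (n + 1) j0 c d
  end.

Definition O3 (R : rcfType) (o : fseries R) (n j0 : int) (c d : int) : R[i] :=
  match c with
  | Posz 0 => if d == 0 then o (n + 2) j0 else if d == 2 * j0 then o (n + 2) (- j0)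
              else view o (n + 2) j0 c d
  | Posz 1 => if d == j0 then o (n + 1) 0 else if d == j0 - 2 then o (n + 1) 2
              else if d == j0 + 2 then o (n + 1) (-2) else view o (n + 2) j0 c d
  | Posz 2 => if d == j0 - 1 then o n 1 else if d == j0 + 1 then o n (-1) else 0
  | Posz _ => 0
  | Negz _ => view o (n + 2) j0 c d
  end.

Lemma O1_eq (R : rcfType) (o : fseries R) (n j : int) :
  lows o n -> view o n j = O1 o n j.
Proof.
move=> lo; apply: functional_extensionality => c; apply: functional_extensionality => d.
case: c => [[|c]|c] //=.
  by case: d => [[|d]|d] //=; rewrite /view !subr0.
by rewrite /view lo //; lia.
Qed.

Lemma O2_eq (R : rcfType) (o : fseries R) (n j0 : int) :
  lows o n -> (forall j, j <> 1 -> j <> -1 -> o n j = 0) ->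
  view o (n + 1) j0 = O2 o n j0.
Proof.
move=> lo hn1; apply: functional_extensionality => c; apply: functional_extensionality => d.
case: c => [[|[|c]]|c] //=.
- by case: d => [[|d]|d] //=; rewrite /view !subr0.
- rewrite /view; case: eqP => h1.
    by congr (o _ _); lia.
  case: eqP => h2; first by congr (o _ _); lia.
  have -> : n + 1 - 1 = n by ring.
  by apply: hn1; lia.
- by rewrite /view lo //; lia.
Qed.

Lemma O3_eq (R : rcfType) (o : fseries R) (n j0 : int) :
  lows o n -> (forall j, j <> 1 -> j <> -1 -> o n j = 0) ->
  view o (n + 2) j0 = O3 o n j0.
Proof.
move=> lo hn1; apply: functional_extensionality => c; apply: functional_extensionality => d.
case: c => [[|[|[|c]]]|c] //=; rewrite /view.
- case: eqP => h1; first by congr (o _ _); lia.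
  by case: eqP => h2 //; congr (o _ _); lia.
- case: eqP => h1; first by congr (o _ _); lia.
  case: eqP => h2; first by congr (o _ _); lia.
  by case: eqP => h3 //; congr (o _ _); lia.
- case: eqP => h1; first by congr (o _ _); lia.
  case: eqP => h2; first by congr (o _ _); lia.
  have -> : n + 2 - 2 = n by ring.
  by apply: hn1; lia.
- by rewrite lo //; lia.
Qed.

Ltac pipeline lo hn :=
  rewrite Lin_view;
  rewrite (view_T2 _ _ _ _ _ _ _ lo hn); [ | lia | lia];
  rewrite (view_T3 _ _ _ _ _ _ _ lo hn); [ | lia | lia];
  rewrite (view_T4 _ _ _ _ _ _ _ lo hn); [ | lia | lia];
  rewrite (view_T5 _ _ _ _ _ lo hn); [ | lia | lia];
  rewrite !big_cons !big_nil;
  rewrite !view_eloR; [ | (match goal with |- is_true (_ <= _) => lia end) ..];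
  rewrite !view_eloL; [ | (match goal with |- is_true (_ <= _) => lia end) ..];
  rewrite !fmul_eloL; [ | (match goal with |- is_true (_ <= _) => lia end) ..];
  rewrite !view_Eop /Eop; simpl elo.

Lemma step1 (R : rcfType) (a : R[i]) (beta : R) (kappa pp qq s2 s0 sm : R[i]) (o : fseries R) (n j : int) :
  2 <= n -> lows o n -> `|j| <= n ->
  (beta ^+ 2)%:C = - (('i * Theta2 beta) ^+ 2) / 27 ->
  Lin a beta kappa (elo pp qq s2 s0 sm) o n j =
  4 * ('i * Theta2 beta) ^+ 2 / 9 * (j%:~R ^+ 2 - 1) * o n j.
Proof.
move=> hn lo hj hB2.
pipeline lo hn.
rewrite (O1_eq j lo); simpl O1.
rewrite hB2.
by field.
Qed.

Lemma step2_0 (R : rcfType) (a : R[i]) (beta : R) (kappa pp qq s2 s0 sm : R[i]) (o : fseries R) (n : int) :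
  2 <= n -> lows o n -> (forall j, j <> 1 -> j <> -1 -> o n j = 0) ->
  (beta ^+ 2)%:C = - (('i * Theta2 beta) ^+ 2) / 27 ->
  Lin a beta kappa (elo pp qq s2 s0 sm) o (n + 1) 0 =
  - 4 * ('i * Theta2 beta) ^+ 2 / 9 * o (n + 1) 0
  + 8 * ('i * Theta2 beta) ^+ 2 / 9 * (pp * o n (-1) + qq * o n 1).
Proof.
move=> hn lo hn1 hB2.
pipeline lo hn.
rewrite (O2_eq 0 lo hn1); simpl O2.
rewrite hB2.
by field.
Qed.

Lemma step2_2 (R : rcfType) (a : R[i]) (beta : R) (kappa pp qq s2 s0 sm : R[i]) (o : fseries R) (n : int) :
  2 <= n -> lows o n -> (forall j, j <> 1 -> j <> -1 -> o n j = 0) ->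
  (beta ^+ 2)%:C = - (('i * Theta2 beta) ^+ 2) / 27 ->
  Lin a beta kappa (elo pp qq s2 s0 sm) o (n + 1) 2 =
  4 * ('i * Theta2 beta) ^+ 2 / 3 * o (n + 1) 2
  - 8 * ('i * Theta2 beta) ^+ 2 / 9 * pp * o n 1.
Proof.
move=> hn lo hn1 hB2.
pipeline lo hn.
rewrite (O2_eq 2 lo hn1); simpl O2.
rewrite hB2.
by field.
Qed.

Lemma step2_m2 (R : rcfType) (a : R[i]) (beta : R) (kappa pp qq s2 s0 sm : R[i]) (o : fseries R) (n : int) :
  2 <= n -> lows o n -> (forall j, j <> 1 -> j <> -1 -> o n j = 0) ->
  (beta ^+ 2)%:C = - (('i * Theta2 beta) ^+ 2) / 27 ->
  Lin a beta kappa (elo pp qq s2 s0 sm) o (n + 1) (-2) =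
  4 * ('i * Theta2 beta) ^+ 2 / 3 * o (n + 1) (-2)
  - 8 * ('i * Theta2 beta) ^+ 2 / 9 * qq * o n (-1).
Proof.
move=> hn lo hn1 hB2.
pipeline lo hn.
rewrite (O2_eq (-2) lo hn1); simpl O2.
rewrite hB2.
by field.
Qed.

Lemma step3_p (R : rcfType) (a : R[i]) (beta : R) (kappa pp qq s2 s0 sm : R[i]) (o : fseries R) (n : int) :
  2 <= n -> lows o n -> (forall j, j <> 1 -> j <> -1 -> o n j = 0) ->
  (beta ^+ 2)%:C = - (('i * Theta2 beta) ^+ 2) / 27 ->
  Lin a beta kappa (elo pp qq s2 s0 sm) o (n + 2) 1 =
  12 * (- (('i * Theta2 beta) ^+ 2) / 27) * (o n 1 * (2 * pp * qq + s0) + o n (-1) * (pp ^+ 2 - 7 * s2)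
      + pp * o (n + 1) 0 - 7 * qq * o (n + 1) 2)
   - 4 * a * beta%:C * o n 1 + 2 * ('i * Theta2 beta) / 9 * (4 * kappa - 2 * n%:~R + 2) * o n 1.
Proof.
move=> hn lo hn1 hB2.
pipeline lo hn.
rewrite (O3_eq 1 lo hn1); simpl O3.
rewrite hB2.
by field.
Qed.

Lemma step3_m (R : rcfType) (a : R[i]) (beta : R) (kappa pp qq s2 s0 sm : R[i]) (o : fseries R) (n : int) :
  2 <= n -> lows o n -> (forall j, j <> 1 -> j <> -1 -> o n j = 0) ->
  (beta ^+ 2)%:C = - (('i * Theta2 beta) ^+ 2) / 27 ->
  Lin a beta kappa (elo pp qq s2 s0 sm) o (n + 2) (-1) =
  12 * (- (('i * Theta2 beta) ^+ 2) / 27) * (o n (-1) * (2 * pp * qq + s0) + o n 1 * (qq ^+ 2 - 7 * sm)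
      + qq * o (n + 1) 0 - 7 * pp * o (n + 1) (-2))
   - 4 * a * beta%:C * o n (-1) + 2 * ('i * Theta2 beta) / 9 * (2 * n%:~R - 2 + 4 * kappa) * o n (-1).
Proof.
move=> hn lo hn1 hB2.
pipeline lo hn.
rewrite (O3_eq (-1) lo hn1); simpl O3.
rewrite hB2.
by field.
Qed.

Lemma even_eq (R : rcfType) (a : R[i]) beta kappa (e o : fseries R) k j :
  evenS e -> oddS o -> lows e 0 -> lows o 2 -> k < 4 -> evz (k + j) ->
  Fv a beta kappa (addf e o) k j = Fv a beta kappa e k j.
Proof.
move=> he ho le lo hk hkj.
have hEe : evenS (Eop kappa beta e) by apply: Eop_even.
have hEo : oddS (Eop kappa beta o) by apply: Eop_odd.
have hEEe : evenS (Eop kappa beta (Eop kappa beta e)) by apply: Eop_even.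
have hEEo : oddS (Eop kappa beta (Eop kappa beta o)) by apply: Eop_odd.
have lEo := lows_Eop kappa beta lo.
have lEEo := lows_Eop kappa beta lEo.
have hk4 : evz (k - 4 + j) by move: hkj; rewrite /evz; lia.
rewrite /Fv !EopD; do 4 rewrite ?fmulDl ?fmulDr; rewrite !addfE.
rewrite (fmul_eo he hEEo hk4) (fmul_oe ho hEEe hk4) (fmul_eo hEe hEo hk4) (fmul_oe hEo hEe hk4).
rewrite (fmul_eo (fmul_ee he he) ho hkj) (fmul_oe (fmul_eo he ho) he hkj).
rewrite (fmul_oe (fmul_oe ho he) he hkj).
rewrite (lows_fmul lo lEEo); last by lia.
rewrite (lows_fmul lEo lEo); last by lia.
rewrite (lows_fmul (lows_fmul le lo) lo); last by lia.
rewrite (lows_fmul (lows_fmul lo le) lo); last by lia.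
rewrite (lows_fmul (lows_fmul lo lo) le); last by lia.
rewrite (lows_fmul (lows_fmul lo lo) lo); last by lia.
rewrite (lo (k - 2) j); last by lia.
ring.
Qed.

Lemma Fv_loc (R : rcfType) (a : R[i]) beta kappa (e e' : fseries R) k j :
  lows e 0 -> lows e' 0 -> agree e e' 2 -> k <= 2 ->
  Fv a beta kappa e k j = Fv a beta kappa e' k j.
Proof.
move=> le le' ag hk.
have aE := agree_Eop kappa beta ag.
have aEE := agree_Eop kappa beta aE.
have lEe := lows_Eop kappa beta le.
have lEe' := lows_Eop kappa beta le'.
have lEEe' := lows_Eop kappa beta lEe'.
rewrite /Fv.
congr (_ - _ + _ * (_ - _) - _ * _).
- rewrite (@fmul_extR _ e _ (Eop kappa beta (Eop kappa beta e'))); last first.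
    move=> p q; case: (ltP p 0) => h; first by right; apply: le.
    by left; apply: aEE; lia.
  apply: fmul_extL => p q; case: (lerP p 2) => h; first by left; apply: ag.
  by right; apply: lEEe'; lia.
- rewrite (@fmul_extR _ (Eop kappa beta e) _ (Eop kappa beta e')); last first.
    move=> p q; case: (ltP p (0 - 2)) => h; first by right; apply: lEe.
    by left; apply: aE; lia.
  apply: fmul_extL => p q; case: (lerP p 0) => h; first by left; apply: aE; lia.
  by right; apply: lEe'; lia.
- rewrite (@fmul_extR _ (fmul e e) e e'); last first.
    move=> p q; case: (ltP p (0 + 0)) => h; first by right; apply: (lows_fmul le le).
    by left; apply: ag; lia.
  apply: fmul_extL => p q; case: (lerP p 2) => h.
    by left; apply: (agree_fmul ag ag le le' le le').
  by right; apply: le'; lia.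
- by apply: ag; lia.
Qed.

Lemma boxEE (R : rcfType) kappa beta (pp qq s2 s0 sm : R[i]) (j : int) :
  `|j| <= 2 ->
  fmul (Eop kappa beta (elo pp qq s2 s0 sm)) (Eop kappa beta (elo pp qq s2 s0 sm)) (-2) j =
  \sum_(a <- [:: -2; -1; 0]) \sum_(b <- [:: -2; -1; 0; 1; 2])
     Eop kappa beta (elo pp qq s2 s0 sm) a b * Eop kappa beta (elo pp qq s2 s0 sm) (-2 - a) (j - b).
Proof.
move=> hj.
have lEe := lows_Eop kappa beta (lows_elo pp qq s2 s0 sm).
have tEe := tri_Eop kappa beta (tri_elo pp qq s2 s0 sm).
apply: fmul_boxL => //; try by rewrite /=; lia.
move=> p q; rewrite !inE => H.
case: (ltP p (-2)) => ?; first by zby lEe.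
case: (ltP 0 p) => ?; first by rewrite [X in _ * X]lEe ?mulr0 //; lia.
by zby tEe.
Qed.

Ltac lvl2 :=
  rewrite /Fv fmul_eloL; last (by lia);
  rewrite boxEE; last (by lia);
  rewrite fmul_eloR; [ | lia | lia];
  rewrite !fmul_eloL; [ | (match goal with |- is_true (_ <= _) => lia end) ..];
  rewrite !big_cons !big_nil /Eop; simpl elo.

Lemma lvl2_2 (R : rcfType) (a : R[i]) (beta : R) (kappa pp qq s2 s0 sm : R[i]) :
  (beta ^+ 2)%:C = - (('i * Theta2 beta) ^+ 2) / 27 ->
  Fv a beta kappa (elo pp qq s2 s0 sm) 2 2 = 4 * ('i * Theta2 beta) ^+ 2 / 9 * (3 * s2 - pp ^+ 2).
Proof. move=> hB2; lvl2; rewrite hB2 /=; by field. Qed.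

Lemma lvl2_m2 (R : rcfType) (a : R[i]) (beta : R) (kappa pp qq s2 s0 sm : R[i]) :
  (beta ^+ 2)%:C = - (('i * Theta2 beta) ^+ 2) / 27 ->
  Fv a beta kappa (elo pp qq s2 s0 sm) 2 (-2) = 4 * ('i * Theta2 beta) ^+ 2 / 9 * (3 * sm - qq ^+ 2).
Proof. move=> hB2; lvl2; rewrite hB2 /=; by field. Qed.

Lemma lvl2_0 (R : rcfType) (a : R[i]) (beta : R) (kappa pp qq s2 s0 sm : R[i]) :
  (beta ^+ 2)%:C = - (('i * Theta2 beta) ^+ 2) / 27 ->
  Fv a beta kappa (elo pp qq s2 s0 sm) 2 0 =
    4 * ('i * Theta2 beta) ^+ 2 / 9 * (2 * pp * qq - s0) - 4 * a * beta%:C.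
Proof. move=> hB2; lvl2; rewrite hB2 /=; by field. Qed.


Lemma solve_lin (F : fieldType) (x y c lhs : F) : lhs = 0 -> x - y = c * lhs -> x = y.
Proof. by move=> h1 h2; apply/eqP; rewrite -subr_eq0 h2 h1 mulr0. Qed.

Lemma algebra_final (R : rcfType) (u pp qq s2 s0 sm kappa a B X1 Xm1 Y0 Y2 Ym2 : R[i]) (n : int) :
  u != 0 -> 2 <= n ->
  u * pp * qq = 3 * kappa ->
  4 * u ^+ 2 / 9 * (3 * s2 - pp ^+ 2) = 0 ->
  4 * u ^+ 2 / 9 * (3 * sm - qq ^+ 2) = 0 ->
  4 * u ^+ 2 / 9 * (2 * pp * qq - s0) - 4 * a * B = 0 ->
  - 4 * u ^+ 2 / 9 * Y0 + 8 * u ^+ 2 / 9 * (pp * Xm1 + qq * X1) = 0 ->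
  4 * u ^+ 2 / 3 * Y2 - 8 * u ^+ 2 / 9 * pp * X1 = 0 ->
  4 * u ^+ 2 / 3 * Ym2 - 8 * u ^+ 2 / 9 * qq * Xm1 = 0 ->
  12 * (- u ^+ 2 / 27) * (X1 * (2 * pp * qq + s0) + Xm1 * (pp ^+ 2 - 7 * s2) + pp * Y0 - 7 * qq * Y2)
    - 4 * a * B * X1 + 2 * u / 9 * (4 * kappa - 2 * n%:~R + 2) * X1 = 0 ->
  12 * (- u ^+ 2 / 27) * (Xm1 * (2 * pp * qq + s0) + X1 * (qq ^+ 2 - 7 * sm) + qq * Y0 - 7 * pp * Ym2)
    - 4 * a * B * Xm1 + 2 * u / 9 * (2 * n%:~R - 2 + 4 * kappa) * Xm1 = 0 ->
  X1 = 0 /\ Xm1 = 0.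
Proof.
move=> hu hn hk H2 Hm2 H0 HY0 HY2 HYm2 E1 E2.
have hk' : kappa = u * pp * qq / 3.
  have hk0 : u * pp * qq - 3 * kappa = 0 by rewrite hk subrr.
  by apply: (solve_lin hk0 (c := -1/3)); field.
have hs2 : s2 = pp ^+ 2 / 3.
  by apply: (solve_lin H2 (c := 9 / (12 * u ^+ 2))); field.
have hsm : sm = qq ^+ 2 / 3.
  by apply: (solve_lin Hm2 (c := 9 / (12 * u ^+ 2))); field.
have hs0 : s0 = 2 * pp * qq - 9 * a * B / u ^+ 2.
  by apply: (solve_lin H0 (c := - 9 / (4 * u ^+ 2))); field.
have hY0 : Y0 = 2 * (pp * Xm1 + qq * X1).
  by apply: (solve_lin HY0 (c := - 9 / (4 * u ^+ 2))); field.
have hY2 : Y2 = 2 / 3 * pp * X1.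
  by apply: (solve_lin HY2 (c := 3 / (4 * u ^+ 2))); field.
have hYm2 : Ym2 = 2 / 3 * qq * Xm1.
  by apply: (solve_lin HYm2 (c := 3 / (4 * u ^+ 2))); field.
subst kappa s2 sm s0 Y0 Y2 Ym2.
set c11 := - (8 / 27) * u ^+ 2 * pp * qq - 4 * u / 9 * (n%:~R - 1).
set c12 := - (8 / 27) * u ^+ 2 * pp ^+ 2.
set c21 := - (8 / 27) * u ^+ 2 * qq ^+ 2.
set c22 := - (8 / 27) * u ^+ 2 * pp * qq + 4 * u / 9 * (n%:~R - 1).
have e1 : c11 * X1 + c12 * Xm1 = 0.
  by apply: (solve_lin E1 (c := 1)); rewrite /c11 /c12; field.
have e2 : c21 * X1 + c22 * Xm1 = 0.
  by apply: (solve_lin E2 (c := 1)); rewrite /c21 /c22; field.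
have hd : - (16 / 81) * u ^+ 2 * (n%:~R - 1) ^+ 2 != 0 :> R[i].
  have hn1 : (n%:~R - 1 : R[i]) != 0.
    have -> : (n%:~R - 1 : R[i]) = (n - 1)%:~R by rewrite intrB.
    by rewrite intr_eq0; lia.
  have h16 : - (16 / 81) != 0 :> R[i].
    by rewrite oppr_eq0 mulf_neq0 // ?invr_eq0 pnatr_eq0.
  by rewrite mulf_neq0 // ?mulf_neq0 // ?expf_neq0.
split.
- have d1 : - (16 / 81) * u ^+ 2 * (n%:~R - 1) ^+ 2 * X1 = 0.
    have -> : - (16 / 81) * u ^+ 2 * (n%:~R - 1) ^+ 2 * X1
       = c22 * (c11 * X1 + c12 * Xm1) - c12 * (c21 * X1 + c22 * Xm1).
      by rewrite /c11 /c12 /c21 /c22; field.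
    by rewrite e1 e2 !mulr0 subrr.
  by move/eqP: d1; rewrite mulf_eq0 (negbTE hd) /= => /eqP.
- have d1 : - (16 / 81) * u ^+ 2 * (n%:~R - 1) ^+ 2 * Xm1 = 0.
    have -> : - (16 / 81) * u ^+ 2 * (n%:~R - 1) ^+ 2 * Xm1
       = c11 * (c21 * X1 + c22 * Xm1) - c21 * (c11 * X1 + c12 * Xm1).
      by rewrite /c11 /c12 /c21 /c22; field.
    by rewrite e1 e2 !mulr0 subrr.
  by move/eqP: d1; rewrite mulf_eq0 (negbTE hd) /= => /eqP.
Qed.


Theorem mainTheorem7 (R : rcfType) (eps : R) (b : R) (a : R[i]) (beta : R)
    (kappa : R[i]) (coef : nat -> int -> R[i]) :
  (eps = 1 \/ eps = -1) ->
  b != 0 ->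
  beta ^+ 3 = eps * b ->
  `|@complex.Re R kappa| < 1 / 2 ->
  (forall (k : nat) (j : int), (k%:Z < `|j|)%R -> coef k j = 0) ->
  coef 0%N 0 = 1 ->
  coef 1%N 0 = 0 ->
  Theta2 beta * coef 1%N 1 * coef 1%N (-1) = - (3 * 'i * kappa) ->
  formal_solution a beta kappa coef ->
  (forall n : nat, coef n (1 - n%:Z) = 0 /\ coef n (n%:Z - 1) = 0) /\
  (forall j : nat, coef (2 * j)%N 1 = 0 /\ coef (2 * j)%N (-1) = 0).
Proof.
move=> heps hb hbeta _ hsupp h00 h10 hpq hsol.
have hFv := formal_Fv hsol.
have hbeta0 : beta != 0.
  apply/eqP => hb0.
  have h1 : eps * b = 0 by rewrite -hbeta hb0 expr0n.
  move/eqP: h1; rewrite mulf_eq0 (negbTE hb) orbF.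
  by case: heps => ->; rewrite ?oppr_eq0 oner_eq0.
have hT : Theta2 beta != 0.
  rewrite /Theta2; apply/eqP => h.
  have h' : (3 * Num.sqrt 3 * beta : R) = 0 by apply: complexI; rewrite h.
  move/eqP: h'; rewrite !mulf_eq0 (negbTE hbeta0) orbF sqrtr_eq0 pnatr_eq0 /=.
  by move=> ?; lra.
have hu : 'i * Theta2 beta != 0.
  by rewrite mulf_neq0 // eq_complex /= oner_eq0 andbF.
have hB2 : (beta ^+ 2)%:C = - (('i * Theta2 beta) ^+ 2) / 27.
  rewrite exprMn sqr_i mulN1r opprK /Theta2 -rmorphXn.
  have -> : ((3 * Num.sqrt 3 * beta) ^+ 2 : R) = 27 * beta ^+ 2.
    rewrite !exprMn sqr_sqrtr ?ler0n //; ring.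
  rewrite !rmorphM rmorph_nat.
  by field.
have v_neg : forall k j, k < 0 -> vser coef k j = 0.
  by move=> [k|k] j h //=; exfalso; lia.
have v_tri : forall k j, k < `|j| -> vser coef k j = 0.
  by move=> [k|k] j h //=; apply: hsupp.
pose e : fseries R := fun k j => if evz (k + j) then vser coef k j else 0.
pose o : fseries R := fun k j => if evz (k + j) then 0 else vser coef k j.
have veo : vser coef = addf e o.
  apply: functional_extensionality => k; apply: functional_extensionality => j.
  by rewrite addfE /e /o; case: (evz _); rewrite ?addr0 ?add0r.
have he : evenS e by move=> k j h; rewrite /e (negbTE h).
have ho : oddS o by move=> k j h; rewrite /o h.
have le : lows e 0 by move=> k j h; rewrite /e v_neg // if_same.
have lo2 : lows o 2.
  move=> k j hk; rewrite /o; case: ifP => // hev.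
  case: (ltP k 0) => h0; first by apply: v_neg.
  have [hk'|hk'] : k = 0 \/ k = 1 by lia.
    by subst k; apply: v_tri; move/negbT: hev; rewrite /evz; lia.
  subst k.
  case: (eqVneq j 0) => [->|hj0]; first by [].
  by apply: v_tri; move/negbT: hev hj0; rewrite /evz; lia.
set pp := coef 1%N 1. set qq := coef 1%N (-1).
set s2 := coef 2%N 2. set s0 := coef 2%N 0. set sm := coef 2%N (-2).
have ag : agree e (elo pp qq s2 s0 sm) 2.
  move=> p q hp.
  case: (ltP p 0) => h0.
    by rewrite (le p q h0) (@lows_elo _ pp qq s2 s0 sm p q h0).
  case: (ltP p `|q|) => h1.
    by rewrite /e v_tri // if_same (@tri_elo _ pp qq s2 s0 sm p q) //; lia.
  have hp3 : p = 0 \/ p = 1 \/ p = 2 by lia.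
  move: h1; case: hp3 => [->|[->|->]] h1.
  - by have -> : q = 0 by lia.
  - by have [->|[->|->]] : q = -1 \/ q = 0 \/ q = 1 by lia.
  - by have [->|[->|[->|[->|->]]]] : q = -2 \/ q = -1 \/ q = 0 \/ q = 1 \/ q = 2 by lia.
have L2 : forall j, (j = 2 \/ j = 0 \/ j = -2) -> Fv a beta kappa (elo pp qq s2 s0 sm) 2 j = 0.
  move=> j hj.
  rewrite -(@Fv_loc _ a beta kappa e (elo pp qq s2 s0 sm) 2 j le (@lows_elo _ pp qq s2 s0 sm) ag) //.
  rewrite -(@even_eq _ a beta kappa e o 2 j he ho le lo2) //; last by rewrite /evz; lia.
  by rewrite -veo; apply: hFv.
have H2 := L2 2 (or_introl erefl). rewrite lvl2_2 // in H2.
have Hm2 := L2 (-2) (or_intror (or_intror erefl)). rewrite lvl2_m2 // in Hm2.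
have H0 := L2 0 (or_intror (or_introl erefl)). rewrite lvl2_0 // in H0.
have hk : 'i * Theta2 beta * pp * qq = 3 * kappa.
  transitivity ('i * (Theta2 beta * pp * qq)); first by ring.
  rewrite hpq (_ : 'i * - (3 * 'i * kappa) = - (3 * ('i * 'i) * kappa)); last by ring.
  by rewrite -expr2 sqr_i; ring.
have main : forall m : nat, (2 <= m)%N -> lows o m%:Z.
  elim=> [|m IH] hm //.
  case: (leqP m 1) => hm1.
    by have -> : m.+1 = 2%N by lia.
  have lom := IH hm1.
  have hn : 2 <= m%:Z by lia.
  have toLin : forall K j, m%:Z <= K <= m%:Z + 2 -> ~~ evz (K + j) ->
      Lin a beta kappa (elo pp qq s2 s0 sm) o K j = 0.
    move=> K j hK hev.
    rewrite -(@Lin_loc _ a beta kappa e (elo pp qq s2 s0 sm) o m%:Z K j le (@lows_elo _ pp qq s2 s0 sm) ag lom) //; last by lia.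
    rewrite -(@odd_eq _ a beta kappa e o m%:Z K j he ho lom) //; last by lia.
    by rewrite -veo; apply: hFv.
  have hn1 : forall j, j <> 1 -> j <> -1 -> o m%:Z j = 0.
    move=> j hj1 hj2.
    case: (boolP (evz (m%:Z + j))) => hev; first by apply: ho.
    case: (ltP m%:Z `|j|) => hj; first by rewrite /o (negbTE hev); apply: v_tri.
    have E := toLin m%:Z j (ltac:(lia)) hev.
    rewrite (step1 _ _ _ _ _ _ _ hn lom hj hB2) in E.
    have hc : 4 * ('i * Theta2 beta) ^+ 2 / 9 * (j%:~R ^+ 2 - 1) != 0 :> R[i].
      have hj' : (j%:~R ^+ 2 - 1 : R[i]) != 0.
        have -> : (j%:~R ^+ 2 - 1 : R[i]) = (j ^+ 2 - 1)%:~R by rewrite intrB rmorphXn.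
        by rewrite intr_eq0; nia.
      have h4 : (4 : R[i]) != 0 by rewrite pnatr_eq0.
      have h9 : (9 : R[i])^-1 != 0 by rewrite invr_eq0 pnatr_eq0.
      by apply: mulf_neq0 => //; apply: mulf_neq0 => //; apply: mulf_neq0 => //; apply: expf_neq0.
    by move/eqP: E; rewrite mulf_eq0 (negbTE hc) /= => /eqP.
  have hX : o m%:Z 1 = 0 /\ o m%:Z (-1) = 0.
    case: (boolP (evz (m%:Z + 1))) => hev.
      by split; apply: ho => //; move: hev; rewrite /evz; lia.
    have E20 := toLin (m%:Z + 1) 0 (ltac:(lia)) (ltac:(move: hev; rewrite /evz; lia)).
    rewrite (step2_0 _ _ _ _ _ _ _ hn lom hn1 hB2) in E20.
    have E22 := toLin (m%:Z + 1) 2 (ltac:(lia)) (ltac:(move: hev; rewrite /evz; lia)).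
    rewrite (step2_2 _ _ _ _ _ _ _ hn lom hn1 hB2) in E22.
    have E2m2 := toLin (m%:Z + 1) (-2) (ltac:(lia)) (ltac:(move: hev; rewrite /evz; lia)).
    rewrite (step2_m2 _ _ _ _ _ _ _ hn lom hn1 hB2) in E2m2.
    have E3p := toLin (m%:Z + 2) 1 (ltac:(lia)) (ltac:(move: hev; rewrite /evz; lia)).
    rewrite (step3_p _ _ _ _ _ _ _ hn lom hn1 hB2) in E3p.
    have E3m := toLin (m%:Z + 2) (-1) (ltac:(lia)) (ltac:(move: hev; rewrite /evz; lia)).
    rewrite (step3_m _ _ _ _ _ _ _ hn lom hn1 hB2) in E3m.
    exact: (algebra_final hu hn hk H2 Hm2 H0 E20 E22 E2m2 E3p E3m).
  move=> k j hkk.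
  case: (ltP k m%:Z) => h; first by apply: lom.
  have -> : k = m%:Z by lia.
  case: (eqVneq j 1) => [->|h1]; first by case: hX.
  case: (eqVneq j (-1)) => [->|h2]; first by case: hX.
  by apply: hn1; apply/eqP.
have fin : forall (n : nat) j, ~~ evz (n%:Z + j) -> coef n j = 0.
  move=> n j hev.
  case: (leqP n 0) => hn.
    have -> : n = 0%N by lia.
    by apply: hsupp; move: hev hn; rewrite /evz; lia.
  have lo' := main n.+1 (ltac:(lia)).
  have := lo' n j (ltac:(lia)).
  by rewrite /o (negbTE hev).
split => n; split; apply: fin; rewrite /evz; lia.
Qed.
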